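(* There is an absolute constant $C>0$ such that the following holds. Let $G=(V,E)$ be an unweighted graph with maximum vertex degree $d_{\max}$, and let $s,t\in V$ be distinct. Then there is a subset $S\subset V$ with $s\in S$, $t\in V\setminus S$, and $$ \frac{B_{st}^{2}}{R_{st}}\leq C\,d_{\max}\,\Theta(S)^{-2}. $$
   Context: For an unweighted graph with $n$ vertices, $L=D-A$ is the graph Laplacian, $L^{+}$ its Moore–Penrose pseudoinverse, $L^{2+}=(L^+)^2$, and $1_v$ the indicator vector of vertex $v$. The effective resistance is $R_{st}=(1_s-1_t)^{T}L^{+}(1_s-1_t)$ and the biharmonic distance is $B_{st}=\sqrt{(1_s-1_t)^{T}L^{2+}(1_s-1_t)}$. For a nonempty proper subset $S\subset V$, $E(S,V\setminus S)$ is the set of edges with one endpoint in $S$ and one in $V\setminus S$, and $\Theta(S)=\frac{n|E(S,V\setminus S)|}{|S||V\setminus S|}$ (the paper states the conclusion as $B_{st}^2/R_{st}\in O(d_{\max}\Theta(S)^{-2})$). *)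

(* Defs.v *)
From HB Require Import structures.
From mathcomp Require Import all_boot all_order all_algebra.
From mathcomp Require Import reals.
Set Implicit Arguments. Unset Strict Implicit. Unset Printing Implicit Defensive.
Import Order.TTheory GRing.Theory Num.Theory.
Local Open Scope ring_scope.

Definition simple_graph (n : nat) (adj : rel 'I_n) : Prop :=
  symmetric adj /\ irreflexive adj.

Definition deg (n : nat) (adj : rel 'I_n) (v : 'I_n) : nat :=
  #|[set u | adj v u]|.

Definition dmax (n : nat) (adj : rel 'I_n) : nat :=
  \max_(v < n) deg adj v.

Definition laplacian (R : ringType) (n : nat) (adj : rel 'I_n) : 'M[R]_n :=
  \matrix_(i, j) ((deg adj i)%:R *+ (i == j) - (adj i j)%:R).

Definition is_pinv (R : ringType) (n : nat) (A X : 'M[R]_n) : Prop :=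
  [/\ A *m X *m A = A, X *m A *m X = X,
      (A *m X)^T = A *m X & (X *m A)^T = X *m A].

Definition ind (R : ringType) (n : nat) (v : 'I_n) : 'cV[R]_n :=
  delta_mx v ord0.

Definition qform (R : ringType) (n : nat) (M : 'M[R]_n) (x : 'cV[R]_n) : R :=
  (x^T *m M *m x) ord0 ord0.

Definition eff_res (R : ringType) (n : nat) (Lp : 'M[R]_n) (s t : 'I_n) : R :=
  qform Lp (ind R s - ind R t).

(* biharmonic distance, with L^{2+} = Lp *m Lp *)
Definition biharm (R : rcfType) (n : nat) (Lp : 'M[R]_n) (s t : 'I_n) : R :=
  Num.sqrt (qform (Lp *m Lp) (ind R s - ind R t)).

(* |E(S, V \ S)| : each undirected edge counted once (oriented from S) *)
Definition cut_size (n : nat) (adj : rel 'I_n) (S : {set 'I_n}) : nat :=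
  #|[set p : 'I_n * 'I_n | [&& p.1 \in S, p.2 \notin S & adj p.1 p.2]]|.

Definition Theta (R : fieldType) (n : nat) (adj : rel 'I_n) (S : {set 'I_n}) : R :=
  (n * cut_size adj S)%:R / (#|S| * #|~: S|)%:R.

(* Main.v *)
Require Import Defs.
From HB Require Import structures.
From mathcomp Require Import all_boot all_order all_algebra.
From mathcomp Require Import reals.
From mathcomp Require Import ring lra zify.
Import Order.TTheory GRing.Theory Num.Theory.
Local Open Scope ring_scope.

Module Helpers.
Set Implicit Arguments. Unset Strict Implicit. Unset Printing Implicit Defensive.

Section Lap.
Variable R : realType.
Variable n : nat.
Variable adj : rel 'I_n.
Hypothesis adj_sym : symmetric adj.

Local Notation L := (laplacian R adj).
Local Notation a i j := ((adj i j)%:R : R).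

Lemma degE i : (deg adj i)%:R = \sum_j a i j.
Proof.
have -> : \sum_j a i j = \sum_(j in [set u | adj i u]) (1:R).
  by rewrite [RHS]big_mkcond; apply eq_bigr => j _; rewrite inE; case: adj.
by rewrite sumr_const.
Qed.

Lemma LmulE (x : 'cV[R]_n) i :
  (L *m x) i ord0 = \sum_j a i j * (x i ord0 - x j ord0).
Proof.
rewrite mxE.
transitivity (\sum_j ((deg adj i)%:R *+ (i == j) * x j ord0)
              - \sum_j a i j * x j ord0).
  by rewrite -sumrB; apply eq_bigr => j _; rewrite mxE mulrBl.
rewrite (bigD1 i) //= eqxx mulr1n big1 ?addr0; last first.
  by move=> j; rewrite eq_sym => /negbTE ->; rewrite mulr0n mul0r.
by rewrite degE mulr_suml -sumrB; apply eq_bigr => j _; rewrite mulrBr.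
Qed.

Definition bil (x y : 'cV[R]_n) :=
  \sum_i \sum_j a i j * (x i ord0 - x j ord0) * (y i ord0 - y j ord0).

Lemma quadE (x y : 'cV[R]_n) : (x^T *m L *m y) ord0 ord0 = bil x y / 2.
Proof.
rewrite -mulmxA mxE.
under eq_bigr do rewrite mxE LmulE mulr_sumr.
set S := \sum_i _.
have HS : S = \sum_i \sum_j a i j * (- x j ord0 * (y i ord0 - y j ord0)).
  rewrite /S exchange_big; apply eq_bigr => i _; apply eq_bigr => j _.
  rewrite adj_sym. ring.
have -> : S = (S + S) / 2 by field.
congr (_ / 2); rewrite {2}HS -big_split /=; apply eq_bigr => i _.
rewrite -big_split /=; apply eq_bigr => j _; ring.
Qed.

Lemma L_sym : L^T = L.
Proof. apply/matrixP => i j; rewrite !mxE adj_sym eq_sym; case: eqP => [->|] //; by rewrite !mulr0n. Qed.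

End Lap.
Lemma pinv_sym (R : realType) n (A X : 'M[R]_n) :
  A^T = A -> is_pinv A X -> X^T = X.
Proof.
move=> As [h1 h2 h3 h4].
set Y := X^T.
have e1 : Y *m A = A *m X by rewrite -h3 trmx_mul As.
have e2 : A *m Y = X *m A by rewrite -h4 trmx_mul As.
have e3 : A *m Y *m A = A by have := congr1 trmx h1; rewrite !trmx_mul As !mulmxA; apply.
have e4 : Y *m A *m Y = Y by have := congr1 trmx h2; rewrite !trmx_mul As !mulmxA; apply.
have f1 : X = X *m Y *m A by rewrite -{1}h2 -mulmxA -e1 mulmxA.
have f2 : X = X *m X *m A.
  by rewrite {1}f1 -{1}h1 !mulmxA -f1.
have f3 : X = X *m A *m Y by rewrite -mulmxA e2 mulmxA -f2.
have g1 : Y = A *m X *m Y by rewrite -{1}e4 e1.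
have g2 : Y = A *m Y *m Y.
  by rewrite {1}g1 -{1}e3 -!mulmxA (mulmxA A X Y) -g1.
have g3 : Y = X *m A *m Y by rewrite -e2 -g2.
apply/esym; by rewrite {1}f3 -g3.
Qed.

Lemma sq_lb_le (R : realType) (P Q : R) : Q <= P -> (P - Q)^+2 <= 2 * (P * `|P| - Q * `|Q|).
Proof. move=> h; have h0 : 0 <= P - Q by lra. 
case: (ger0P P) => hP; case: (ger0P Q) => hQ.
- have := mulr_ge0 h0 hQ; nra.
- have := sqr_ge0 (P + Q); nra.
- lra.
- have hP' : 0 <= - P by lra. have := mulr_ge0 h0 hP'; nra.
Qed.

Lemma sq_ub_le (R : realType) (P Q lam : R) : Q <= P -> 0 < lam ->
  2 * lam * (P * `|P| - Q * `|Q|) <= lam^+2 * (P - Q)^+2 + 2 * (P^+2 + Q^+2).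
Proof.
move=> hPQ hl.
have h0 : 0 <= P - Q by lra.
have h1 : P * `|P| - Q * `|Q| <= (P - Q) * (`|P| + `|Q|).
  case: (ger0P P) => hP; case: (ger0P Q) => hQ.
  - by rewrite -subr_ge0; set e := (X in 0 <= X); have -> : e = 0 by rewrite /e; ring.
  - have hQ' : 0 <= - Q by lra.
    have hm := mulr_ge0 hP hQ'.
    rewrite -subr_ge0; set e := (X in 0 <= X); have -> : e = 2 * (P * - Q) by rewrite /e; ring.
    by apply: mulr_ge0.
  - lra.
  - by rewrite -subr_ge0; set e := (X in 0 <= X); have -> : e = 0 by rewrite /e; ring.
have hv : (`|P| + `|Q|) ^+ 2 <= 2 * (P^+2 + Q^+2).
  rewrite -[P ^+ 2]real_normK ?num_real // -[Q ^+ 2]real_normK ?num_real //.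
  rewrite -subr_ge0.
  have -> : 2 * (`|P| ^+ 2 + `|Q| ^+ 2) - (`|P| + `|Q|) ^+ 2 = (`|P| - `|Q|)^+2 by ring.
  exact: sqr_ge0.
have h2 : 2 * lam * ((P - Q) * (`|P| + `|Q|)) <= lam^+2 * (P - Q)^+2 + (`|P| + `|Q|) ^+ 2.
  rewrite -subr_ge0.
  have -> : lam^+2 * (P - Q)^+2 + (`|P| + `|Q|) ^+ 2 - 2 * lam * ((P - Q) * (`|P| + `|Q|))
     = (lam * (P - Q) - (`|P| + `|Q|))^+2 by ring.
  exact: sqr_ge0.
apply: le_trans (_ : 2 * lam * ((P - Q) * (`|P| + `|Q|)) <= _).
  by rewrite ler_pM2l // mulr_gt0.
apply: (le_trans h2); by rewrite lerD2l.
Qed.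

Section LayerCake.
Variable R : realType.
Variable n : nat.
Variables (w : 'I_n -> R) (lo : R) (psi : R -> R).
Hypothesis lo_le : forall i, lo <= w i.
Hypothesis psi_mono : forall x y, x <= y -> psi x <= psi y.

Definition predv (x : 'I_n) : R := \big[Order.max/lo]_(y | w y < w x) w y.
Definition mult (x : 'I_n) : nat := #|[set y | w y == w x]|.
Definition hh (x : 'I_n) : R := (psi (w x) - psi (predv x)) / (mult x)%:R.

Lemma predv_le x : predv x <= w x.
Proof. apply: bigmax_le => [|y /ltW //]; exact: lo_le. Qed.

Lemma predv_ge x y : w y < w x -> w y <= predv x.
Proof. move=> h; exact: le_bigmax_cond. Qed.

Lemma predv_att x y : w y < w x -> exists z, w z < w x /\ predv x = w z.
Proof.
move=> h.
have [z hz ez] := eq_bigmax (x:=lo) y (fun y => w y < w x) w h (fun i _ => lo_le i).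
by exists z.
Qed.

Lemma hh_ge0 x : 0 <= hh x.
Proof.
apply: divr_ge0; last exact: ler0n.
rewrite subr_ge0; apply: psi_mono; exact: predv_le.
Qed.

Lemma hh_eq x x' : w x = w x' -> hh x = hh x'.
Proof. by move=> e; rewrite /hh /predv /mult e. Qed.

Lemma hh_lo x : w x = lo -> hh x = 0.
Proof.
move=> e; rewrite /hh /predv big_pred0; last by move=> y /=; rewrite e ltNge lo_le.
by rewrite e subrr mul0r.
Qed.

Lemma layer u v : w v <= w u ->
  \sum_(x | (w v < w x) && (w x <= w u)) hh x = psi (w u) - psi (w v).
Proof.
move=> huv0.
suff main : forall (k : nat) u, w v <= w u ->
    leq #|[set x | (w v < w x) && (w x <= w u)]| k ->
    \sum_(x | (w v < w x) && (w x <= w u)) hh x = psi (w u) - psi (w v).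
  exact: (main _ u huv0 (leqnn _)).
elim=> [|k IH] {huv0} u huv hk.
all: case: (eqVneq (w v) (w u)) => [e|ne].
- rewrite e subrr big_pred0 // => x /=; rewrite ltNge; by case: (w x <= w u).
- have hlt : w v < w u by rewrite lt_neqAle ne huv.
  have uin : u \in [set x | (w v < w x) && (w x <= w u)] by rewrite inE hlt lexx.
  have : leq 1 #|[set x | (w v < w x) && (w x <= w u)]| by apply/card_gt0P; exists u.
  by rewrite ltnNge hk.
- rewrite e subrr big_pred0 // => x /=; rewrite ltNge; by case: (w x <= w u).
- have hlt : w v < w u by rewrite lt_neqAle ne huv.
  have [z [hzu ez]] := predv_att hlt.
  have hvz : w v <= w z by rewrite -ez; apply: predv_ge.
  have uin : u \in [set x | (w v < w x) && (w x <= w u)] by rewrite inE hlt lexx.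
  have hsub : [set x | (w v < w x) && (w x <= w z)] \subset
              [set x | (w v < w x) && (w x <= w u)] :\ u.
    apply/subsetP => x; rewrite !inE => /andP[h1 h2].
    rewrite h1 (le_trans h2 (ltW hzu)) !andbT; apply: contraTneq (le_lt_trans h2 hzu) => ->; by rewrite ltxx.
  have hcard : leq #|[set x | (w v < w x) && (w x <= w z)]| k.
    have := subset_leq_card hsub.
    have := cardsD1 u [set x | (w v < w x) && (w x <= w u)].
    move=> e; move: hk; rewrite e uin => hk h; apply: leq_trans h _; move: hk; rewrite /nat_of_bool; lia.
  have IHz := IH z hvz hcard.
  rewrite (bigID (fun x => w x == w u)) /=.
  have -> : \sum_(x | ((w v < w x) && (w x <= w u)) && (w x == w u)) hh x
          = \sum_(x | w x == w u) hh u.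
    apply: eq_big => [x|x /andP[_ /eqP ex]]; last exact: hh_eq.
    by case: (eqVneq (w x) (w u)) => [->|_]; [rewrite hlt lexx | rewrite andbF].
  have -> : \sum_(x | ((w v < w x) && (w x <= w u)) && (w x != w u)) hh x
          = \sum_(x | (w v < w x) && (w x <= w z)) hh x.
    apply: eq_bigl => x /=; apply/idP/idP => [/andP[/andP[h1 h2] h3]|/andP[h1 h2]].
      by rewrite h1 /= -ez; apply: predv_ge; rewrite lt_neqAle h3 h2.
    by rewrite h1 (le_trans h2 (ltW hzu)) (lt_eqF (le_lt_trans h2 hzu)).
  rewrite IHz sumr_const.
  have hm : (mult u)%:R != 0 :> R.
    rewrite pnatr_eq0 -lt0n; apply/card_gt0P; exists u; by rewrite inE.
  have -> : #|[pred x | w x == w u]| = mult u by rewrite /mult cardsE.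
  by rewrite -mulr_natr /hh divfK // ez addrA subrK.
Qed.

End LayerCake.

Lemma sq_mono (R : realType) (P Q : R) : P <= Q -> P * `|P| <= Q * `|Q|.
Proof. case: (ger0P P) => hP; case: (ger0P Q) => hQ; nra. Qed.

Lemma sq_lb_abs (R : realType) (P Q : R) : (P - Q)^+2 <= 2 * `|P * `|P| - Q * `|Q| |.
Proof.
case: (leP Q P) => h.
  rewrite ger0_norm; first exact: sq_lb_le.
  by rewrite subr_ge0; have := sq_mono h.
rewrite ler0_norm; last by rewrite subr_le0; have := sq_mono (ltW h).
rewrite opprB (_ : (P - Q)^+2 = (Q - P)^+2); first exact: sq_lb_le (ltW h).
by rewrite -sqrrN opprB.
Qed.

Lemma sq_ub_abs (R : realType) (P Q lam : R) : 0 < lam ->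
  2 * lam * `|P * `|P| - Q * `|Q| | <= lam^+2 * (P - Q)^+2 + 2 * (P^+2 + Q^+2).
Proof.
move=> hl; case: (leP Q P) => h.
  rewrite ger0_norm; first exact: sq_ub_le.
  by rewrite subr_ge0; have := sq_mono h.
rewrite ler0_norm; last by rewrite subr_le0; have := sq_mono (ltW h).
rewrite opprB (_ : (P - Q)^+2 = (Q - P)^+2) ?(addrC (P^+2)); first exact: sq_ub_le (ltW h) hl.
by rewrite -sqrrN opprB.
Qed.

Section Cheeger.
Variable R : realType.
Variable n : nat.
Variable adj : rel 'I_n.
Hypothesis adj_sym : symmetric adj.
Variables (w : 'I_n -> R) (s t : 'I_n).
Hypothesis wlo : forall i, w t <= w i.
Hypothesis whi : forall i, w i <= w s.

Local Notation a i j := ((adj i j)%:R : R).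
Definition bilf (f g : 'I_n -> R) :=
  \sum_i \sum_j a i j * (f i - f j) * (g i - g j).
Definition cset (x : 'I_n) := [set y | w x <= w y].

Lemma cardR (A : {set 'I_n}) : #|A|%:R = \sum_u (u \in A)%:R :> R.
Proof. rewrite -sumr_const big_mkcond; apply: eq_bigr => u _; by case: (u \in A). Qed.

Lemma cutE (S : {set 'I_n}) :
  (cut_size adj S)%:R = \sum_u \sum_v ((u \in S) && (v \notin S) && adj u v)%:R :> R.
Proof.
rewrite /cut_size pair_bigA /= -sumr_const big_mkcond /=.
by apply: eq_bigr => p _; rewrite inE andbA; case: (_ && _).
Qed.

Lemma pairsE (S : {set 'I_n}) :
  (#|S| * #|~: S|)%:R = \sum_u \sum_v ((u \in S) && (v \notin S))%:R :> R.
Proof.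
rewrite natrM !cardR mulr_suml; apply: eq_bigr => u _.
rewrite mulr_sumr; apply: eq_bigr => v _; by rewrite -natrM mulnb in_setC.
Qed.

Lemma sum_ind (P : pred 'I_n) (F : 'I_n -> R) :
  \sum_(x | P x) F x = \sum_x F x * (P x)%:R.
Proof. rewrite big_mkcond; apply: eq_bigr => x _; by case: (P x); rewrite ?mulr1 ?mulr0. Qed.

Lemma exch3 (F : 'I_n -> 'I_n -> 'I_n -> R) :
  \sum_u \sum_v \sum_x F u v x = \sum_x \sum_u \sum_v F u v x.
Proof. under eq_bigr do rewrite exchange_big. by rewrite exchange_big. Qed.

Lemma swap2 (F : 'I_n -> 'I_n -> R) :
  \sum_u \sum_v a u v * F u v = \sum_u \sum_v a u v * F v u.
Proof.
rewrite exchange_big; apply: eq_bigr => u _; apply: eq_bigr => v _; by rewrite adj_sym.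
Qed.

Lemma cheeger (K : R) : 0 < K -> 0 < (dmax adj)%:R :> R ->
  4 * (dmax adj)%:R * bilf w w <
    K^+2 * \sum_i (w i - (\sum_j w j) / n%:R)^+2 ->
  exists x, w t < w x /\
    (n * cut_size adj (cset x))%:R <= K * (#|cset x| * #|~: cset x|)%:R.
Proof.
move=> hK hd hmain.
set c := (\sum_j w j) / n%:R in hmain.
set Q := \sum_i (w i - c)^+2 in hmain.
set d := (dmax adj)%:R in hd hmain.
set X := bilf w w in hmain.
have hn : 0 < n%:R :> R by rewrite ltr0n; apply: (leq_ltn_trans (leq0n s)) (ltn_ord s).
pose psi := fun th : R => (th - c) * `|th - c|.
have psi_mono : forall x y, x <= y -> psi x <= psi y.
  by move=> x y hxy; apply: sq_mono; rewrite lerD2r.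
pose h := hh w (w t) psi.
pose ind := fun u v x => ((w v < w x) && (w x <= w u))%:R : R.
pose D := fun u v => \sum_x h x * ind u v x.
have empty : forall u v, w v <= w u -> forall x, ((w u < w x) && (w x <= w v)) = false.
  move=> u v huv x; apply/negbTE/negP => /andP[h1 h2].
  by have := lt_le_trans h1 (le_trans h2 huv); rewrite ltxx.
have hD : forall u v, D u v + D v u = `|psi (w u) - psi (w v)|.
  move=> u v; rewrite /D /ind -!sum_ind; case: (leP (w v) (w u)) => huv.
  - rewrite (layer psi wlo huv) [X in _ + X]big_pred0 ?addr0; last exact: empty.
    by rewrite ger0_norm // subr_ge0; apply: psi_mono.
  - rewrite (layer psi wlo (ltW huv)) big_pred0 ?add0r; last exact: empty (ltW huv).
    by rewrite ler0_norm ?opprB // subr_le0; apply: psi_mono; apply: ltW.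
have hsumD : forall (F : 'I_n -> 'I_n -> R),
    \sum_u \sum_v F u v * D u v = \sum_x h x * \sum_u \sum_v F u v * ind u v x.
  move=> F; rewrite /D.
  under eq_bigr => u _ do under eq_bigr => v _ do rewrite mulr_sumr.
  rewrite exch3; apply: eq_bigr => x _; rewrite mulr_sumr; apply: eq_bigr => u _.
  rewrite mulr_sumr; apply: eq_bigr => v _; by rewrite mulrCA.
have hcut : forall x, \sum_u \sum_v a u v * ind u v x = (cut_size adj (cset x))%:R.
  move=> x; rewrite cutE; apply: eq_bigr => u _; apply: eq_bigr => v _.
  rewrite /ind !inE -ltNge.
  by case: (adj u v); case: (w v < w x); case: (w x <= w u);
    rewrite /= ?mulr1 ?mulr0 ?mul0r ?mul1r.
have hpairs : forall x, \sum_u \sum_v 1 * ind u v x = (#|cset x| * #|~: cset x|)%:R.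
  move=> x; rewrite pairsE; apply: eq_bigr => u _; apply: eq_bigr => v _.
  rewrite /ind !inE -ltNge mul1r.
  by case: (w v < w x); case: (w x <= w u).
case: (boolP [exists x, (w t < w x) &&
   ((n * cut_size adj (cset x))%:R <= K * (#|cset x| * #|~: cset x|)%:R)]).
  by move=> /existsP [x /andP [h1 h2]]; exists x.
move=> /existsPn hno; exfalso.
have hneg : forall x, w t < w x ->
    K * (#|cset x| * #|~: cset x|)%:R < (n * cut_size adj (cset x))%:R.
  by move=> x hx; have := hno x; rewrite hx /= -ltNge.
set A := \sum_u \sum_v a u v * D u v.
set Bp := \sum_u \sum_v 1 * D u v.
have hKB : K * Bp <= n%:R * A.
  rewrite /A /Bp !hsumD !mulr_sumr; apply: ler_sum => x _.
  rewrite hcut hpairs.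
  case: (eqVneq (w x) (w t)) => [e|ne].
    by rewrite /h hh_lo // !mul0r !mulr0.
  have hx : w t < w x by rewrite lt_neqAle eq_sym ne wlo.
  have := hneg x hx; rewrite !natrM => hlt.
  have h0 : 0 <= h x := hh_ge0 wlo psi_mono x.
  rewrite mulrCA [X in _ <= X]mulrCA; exact: (ler_wpM2l h0 (ltW hlt)).
have two : forall z : R, 2 * z = z + z by move=> z; ring.
have h2A : 2 * A = \sum_u \sum_v a u v * `|psi (w u) - psi (w v)|.
  have e := swap2 D.
  rewrite two {2}/A e -big_split /=; apply: eq_bigr => u _.
  by rewrite -big_split; apply: eq_bigr => v _; rewrite /= -mulrDr hD.
have h2B : 2 * Bp = \sum_u \sum_v `|psi (w u) - psi (w v)|.
  have e : Bp = \sum_u \sum_v 1 * D v u by rewrite /Bp exchange_big.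
  rewrite two {1}e /Bp -big_split /=; apply: eq_bigr => u _.
  by rewrite -big_split; apply: eq_bigr => v _; rewrite /= !mul1r addrC hD.
have hP0 : \sum_i (w i - c) = 0.
  rewrite sumrB sumr_const card_ord -mulr_natr /c divfK ?subrr //.
  by rewrite gt_eqF.
have hsq : \sum_u \sum_v (w u - w v)^+2 = 2 * n%:R * Q.
  transitivity (\sum_u \sum_v ((w u - c)^+2 + (w v - c)^+2 - 2 * (w u - c) * (w v - c))).
    by apply: eq_bigr => u _; apply: eq_bigr => v _; ring.
  have inner : forall u, \sum_v ((w u - c)^+2 + (w v - c)^+2 - 2 * (w u - c) * (w v - c))
      = (w u - c)^+2 *+ n + Q.
    move=> u; rewrite sumrB big_split /= sumr_const card_ord -mulr_sumr hP0 mulr0 subr0.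
    by [].
  under eq_bigr => u _ do rewrite inner.
  rewrite big_split /= sumrMnl sumr_const card_ord -/Q !mulr_natr; ring.
have hlow : n%:R * Q <= 2 * Bp.
  have : \sum_u \sum_v (w u - w v)^+2 <= 2 * (2 * Bp).
    rewrite h2B mulr_sumr; apply: ler_sum => u _; rewrite mulr_sumr; apply: ler_sum => v _.
    have := sq_lb_abs (w u - c) (w v - c).
    by rewrite (_ : w u - c - (w v - c) = w u - w v) //; ring.
  rewrite hsq; lra.
have hdeg : \sum_u \sum_v a u v * ((w u - c)^+2 + (w v - c)^+2) <= 2 * d * Q.
  have e0 : \sum_u \sum_v a u v * ((w u - c)^+2 + (w v - c)^+2) =
     \sum_u \sum_v a u v * (w u - c)^+2 + \sum_u \sum_v a u v * (w v - c)^+2.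
    rewrite -big_split; apply: eq_bigr => u _; rewrite -big_split; apply: eq_bigr => v _ /=; ring.
  rewrite e0.
  have e := swap2 (fun u v => (w u - c)^+2); simpl in e; rewrite -e.
  have e2 : \sum_u \sum_v a u v * (w u - c)^+2 = \sum_u (deg adj u)%:R * (w u - c)^+2.
    by apply: eq_bigr => u _; rewrite -mulr_suml degE.
  rewrite e2 -two -mulrA ler_pM2l // /Q mulr_sumr; apply: ler_sum => u _.
  apply: ler_wpM2r; first exact: sqr_ge0.
  rewrite /d ler_nat /dmax; exact: leq_bigmax.
have hup : forall lam, 0 < lam -> 2 * lam * (2 * A) <= lam^+2 * X + 4 * d * Q.
  move=> lam hl; rewrite h2A mulr_sumr.
  have eqX : \sum_u \sum_v a u v * (lam^+2 * (w u - w v)^+2 + 2 * ((w u - c)^+2 + (w v - c)^+2))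
        = lam^+2 * X + 2 * \sum_u \sum_v a u v * ((w u - c)^+2 + (w v - c)^+2).
    rewrite /X /bilf !mulr_sumr -big_split; apply: eq_bigr => u _.
    rewrite !mulr_sumr -big_split; apply: eq_bigr => v _ /=; ring.
  apply: le_trans (_ : \sum_u \sum_v a u v * (lam^+2 * (w u - w v)^+2 + 2 * ((w u - c)^+2 + (w v - c)^+2)) <= _).
    apply: ler_sum => u _; rewrite mulr_sumr; apply: ler_sum => v _.
    rewrite mulrCA; apply: ler_wpM2l; first exact: ler0n.
    have := sq_ub_abs (w u - c) (w v - c) hl.
    by rewrite (_ : w u - c - (w v - c) = w u - w v) //; ring.
  rewrite eqX; lra.
have hA1 : K * Q <= 2 * A.
  have : n%:R * (K * Q) <= n%:R * (2 * A).
    rewrite mulrCA; apply: le_trans (_ : K * (2 * Bp) <= _).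
      by rewrite ler_pM2l.
    rewrite mulrCA [X in _ <= X]mulrCA ler_pM2l //.
  by rewrite ler_pM2l.
pose lam := 4 * d / K.
have hl : 0 < lam by rewrite /lam divr_gt0 // mulr_gt0.
have hlK : lam * K = 4 * d by rewrite /lam divfK // gt_eqF.
have I := hup lam hl.
have J1 : 4 * d * Q <= lam^+2 * X.
  have : 2 * lam * (K * Q) <= 2 * lam * (2 * A) by rewrite ler_pM2l // mulr_gt0.
  have e : 2 * lam * (K * Q) = 8 * d * Q.
    rewrite (_ : 2 * lam * (K * Q) = 2 * (lam * K) * Q); last by ring.
    by rewrite hlK; ring.
  rewrite e => J; lra.
have J2 : 4 * d * Q * K^+2 <= 16 * d^+2 * X.
  have := ler_wpM2r (sqr_ge0 K) J1.
  rewrite (_ : lam ^+ 2 * X * K ^+ 2 = (lam * K)^+2 * X); last by ring.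
  by rewrite hlK (_ : (4 * d)^+2 * X = 16 * d^+2 * X) //; ring.
have J3 : 16 * d^+2 * X < 4 * d * (K^+2 * Q).
  have := hmain; rewrite -(ltr_pM2l (_ : 0 < 4 * d)); last by rewrite mulr_gt0.
  by rewrite (_ : 4 * d * (4 * d * X) = 16 * d^+2 * X) //; ring.
lra.
Qed.

End Cheeger.

Definition clip (R : realType) (lo hi x : R) := Num.min (Num.max x lo) hi.

Lemma clip_mono_lip (R : realType) (lo hi x y : R) : lo <= hi -> y <= x ->
  0 <= clip lo hi x - clip lo hi y <= x - y.
Proof.
move=> hlh hyx; rewrite /clip.
case: (leP x lo) => hx; case: (leP y lo) => hy;
rewrite ?(max_r (ltW hx)) ?(max_r (ltW hy)) ?(max_r hx) ?(max_r hy) ?(max_l (ltW hx)) ?(max_l (ltW hy)) ?(max_l hx) ?(max_l hy);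
case: (leP lo hi) => h1; case: (leP x hi) => h2; case: (leP y hi) => h3;
rewrite ?min_l ?min_r //; try lra.
all: try (apply/andP; split; lra).

Qed.

Lemma clip_sq (R : realType) (lo hi x y : R) : lo <= hi ->
  (clip lo hi x - clip lo hi y)^+2 <= (x - y)^+2.
Proof.
have sqm : forall A B : R, 0 <= A <= B -> A^+2 <= B^+2.
  move=> A B /andP[h1 h2]; rewrite -subr_ge0.
  rewrite (_ : B^+2 - A^+2 = (B - A) * (B + A)); last by ring.
  apply: mulr_ge0; lra.
move=> hlh; case: (leP y x) => h.
  by apply: sqm; apply: clip_mono_lip.
rewrite -sqrrN opprB -[(x - y)^+2]sqrrN opprB.
by apply: sqm; apply: clip_mono_lip (ltW h).
Qed.

Lemma ind_col (R : realType) n (x : 'cV[R]_n) v : (x^T *m ind R v) ord0 ord0 = x v ord0.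
Proof.
rewrite mxE (bigD1 v) //= big1 ?addr0.
  by rewrite !mxE !eqxx mulr1.
by move=> k hk; rewrite !mxE (negbTE hk) mulr0.
Qed.

Lemma bE (R : realType) n (x : 'cV[R]_n) s t :
  (x^T *m (ind R s - ind R t)) ord0 ord0 = x s ord0 - x t ord0.
Proof.
have e : forall A B : 'M[R]_1, (A - B) ord0 ord0 = A ord0 ord0 - B ord0 ord0.
  by move=> A B; rewrite !mxE.
by rewrite mulmxBr e !ind_col.
Qed.

Lemma dotE (R : realType) n (x z : 'cV[R]_n) :
  (x^T *m z) ord0 ord0 = \sum_i x i ord0 * z i ord0.
Proof. by rewrite mxE; apply: eq_bigr => i _; rewrite mxE. Qed.

Section Bil.
Variable R : realType.
Variable n : nat.
Variable adj : rel 'I_n.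
Local Notation a i j := ((adj i j)%:R : R).

Lemma bil_ge0 (x : 'cV[R]_n) : 0 <= bil adj x x.
Proof.
apply: sumr_ge0 => i _; apply: sumr_ge0 => j _.
by rewrite -mulrA mulr_ge0 // -expr2 sqr_ge0.
Qed.

Lemma bil_eq0 (x : 'cV[R]_n) : bil adj x x = 0 ->
  forall i j, adj i j -> x i ord0 = x j ord0.
Proof.
move=> h0 i j hij.
have hge : forall i j, 0 <= a i j * (x i ord0 - x j ord0) * (x i ord0 - x j ord0).
  by move=> i' j'; rewrite -mulrA mulr_ge0 // -expr2 sqr_ge0.
have h1 : \sum_j a i j * (x i ord0 - x j ord0) * (x i ord0 - x j ord0) = 0.
  apply: (psumr_eq0P _ h0) => // k _; exact: sumr_ge0.
have h2 : a i j * (x i ord0 - x j ord0) * (x i ord0 - x j ord0) = 0.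
  by apply: (psumr_eq0P _ h1).
move: h2; rewrite hij mul1r => /eqP; rewrite mulf_eq0 orbb => /eqP /subr0_eq; exact.
Qed.

Lemma bil_L0 (x : 'cV[R]_n) : bil adj x x = 0 -> laplacian R adj *m x = 0.
Proof.
move=> h; apply/matrixP => i k; rewrite (ord1 k) LmulE mxE big1 // => j _.
case hij: (adj i j); first by rewrite (bil_eq0 h hij) subrr mulr0.
by rewrite mul0r.
Qed.

Lemma bil_sub (x z : 'cV[R]_n) :
  bil adj (x - z) (x - z) = bil adj x x - 2 * bil adj x z + bil adj z z.
Proof.
rewrite /bil mulr_sumr -sumrB -big_split; apply: eq_bigr => i _.
rewrite mulr_sumr -sumrB -big_split; apply: eq_bigr => j _ /=.
rewrite !mxE; ring.
Qed.

End Bil.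

Lemma main_lemma (R : realType) n (adj : rel 'I_n) (Lp : 'M[R]_n) (s t : 'I_n) :
  symmetric adj -> is_pinv (laplacian R adj) Lp -> s != t ->
  exists S : {set 'I_n},
    [/\ s \in S, t \notin S &
        biharm Lp s t ^+ 2 * Theta R adj S ^+ 2
          <= 9 * (dmax adj)%:R * eff_res Lp s t].
Proof.
move=> asym hp hst.
set L := laplacian R adj.
have Ls : L^T = L := L_sym R asym.
have Lps : Lp^T = Lp := pinv_sym Ls hp.
case: hp => h1 h2 h3 h4.
set b := ind R s - ind R t.
set y := Lp *m b.
have yT : y^T = b^T *m Lp by rewrite /y trmx_mul Lps.
have comm : Lp *m L = L *m Lp by rewrite -h3 trmx_mul Ls Lps.
have RE : eff_res Lp s t = (y^T *m L *m y) ord0 ord0.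
  rewrite /eff_res /qform -/b yT; congr (_ ord0 ord0).
  by rewrite !mulmxA -(mulmxA _ Lp L) -(mulmxA _ (Lp *m L) Lp) h2.
have RE2 : eff_res Lp s t = bil adj y y / 2 by rewrite RE quadE.
have R0 : 0 <= eff_res Lp s t by rewrite RE2 divr_ge0 ?bil_ge0.
have BE : biharm Lp s t ^+ 2 = \sum_i (y i ord0)^+2.
  rewrite /biharm /qform -/b.
  have -> : (b^T *m (Lp *m Lp) *m b) ord0 ord0 = \sum_i (y i ord0)^+2.
    transitivity ((y^T *m y) ord0 ord0); first by rewrite yT /y !mulmxA.
    by rewrite dotE; apply: eq_bigr => i _; rewrite expr2.
  by rewrite sqr_sqrtr // sumr_ge0 // => i _; apply: sqr_ge0.
have kerL : forall v : 'cV[R]_n, L *m v = 0 -> (y^T *m v) = 0.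
  move=> v hv.
  have Lpv : Lp *m v = 0.
    by rewrite -h2 -(mulmxA Lp L Lp) -comm !mulmxA -(mulmxA _ L v) hv mulmx0.
  by rewrite yT -mulmxA Lpv mulmx0.
set u := b - L *m y.
have Lu : L *m u = 0.
  rewrite /u mulmxBr /y !mulmxA -(mulmxA L L Lp) -comm !mulmxA h1 subrr //.
have uu : u^T *m u = u^T *m b.
  have hL : u^T *m L = 0 by rewrite -Ls -trmx_mul Lu trmx0.
  have e : u^T *m u = u^T *m b - u^T *m L *m y by rewrite -mulmxA -mulmxBr.
  by rewrite e hL mul0mx subr0.
have hd0 : 0 <= (dmax adj)%:R :> R by apply: ler0n.
case: (eqVneq u 0) => [u0|unz]; last first.
  have /existsP [i hi] : [exists i, u i ord0 != 0].
    apply: contraNT unz => /existsPn h; apply/eqP/matrixP => i j.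
    by rewrite (ord1 j) [RHS]mxE; move: (h i); rewrite negbK => /eqP.
  have upos : 0 < \sum_k u k ord0 * u k ord0.
    rewrite (bigD1 i) //=.
    have hs : 0 <= \sum_(k | k != i) u k ord0 * u k ord0.
      by apply: sumr_ge0 => k _; rewrite -expr2 sqr_ge0.
    have hi2 : 0 < u i ord0 * u i ord0 by rewrite -expr2 lt0r sqrf_eq0 hi sqr_ge0.
    lra.
  have hus : u t ord0 < u s ord0.
    have : (u^T *m u) ord0 ord0 = u s ord0 - u t ord0 by rewrite uu bE.
    rewrite dotE => e; lra.
  have bil0 : bil adj u u = 0.
    have : (u^T *m L *m u) ord0 ord0 = 0 by rewrite -mulmxA Lu mulmx0 mxE.
    rewrite quadE //; lra.
  exists [set v | u s ord0 <= u v ord0]; split.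
  - by rewrite inE.
  - by rewrite inE -ltNge.
  - have hcut : cut_size adj [set v | u s ord0 <= u v ord0] = 0%N.
      apply/eqP; rewrite cards_eq0; apply/eqP/setP => p; rewrite !inE.
      apply/negbTE; apply/negP => /and3P[h1' h2' h3'].
      by move: h2'; rewrite -(bil_eq0 bil0 h3') h1'.
    rewrite /Theta hcut muln0 mul0r (_ : (0:R) ^+ 2 = 0) ?mulr0; last by rewrite expr2 mulr0.
    by rewrite mulr_ge0 // mulr_ge0.
have Ly : L *m y = b by apply/esym/eqP; rewrite -subr_eq0 -/u u0.
have RR : eff_res Lp s t = y s ord0 - y t ord0 by rewrite RE -mulmxA Ly bE.
set Rst := eff_res Lp s t in RR R0 RE2 *.
have hts : y t ord0 <= y s ord0 by rewrite -subr_ge0 -RR.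
pose w := fun i => clip (y t ord0) (y s ord0) (y i ord0).
have wt : w t = y t ord0 by rewrite /w /clip maxxx (min_l hts).
have ws : w s = y s ord0 by rewrite /w /clip (max_l hts) minxx.
have wlo : forall i, w t <= w i.
  by move=> i; rewrite wt /w /clip le_min le_max lexx orbT hts.
have whi : forall i, w i <= w s.
  by move=> i; rewrite ws /w /clip ge_min lexx orbT.
pose wv : 'cV[R]_n := \col_i w i.
have wvE : forall i, wv i ord0 = w i by move=> i; rewrite mxE.
have hbw : bil adj wv wv <= bil adj y y.
  apply: ler_sum => i _; apply: ler_sum => j _.
  rewrite !wvE -!mulrA; apply: ler_wpM2l; first exact: ler0n.
  rewrite -!expr2; exact: clip_sq.
have hwy : bil adj wv y = 2 * Rst.
  have : (wv^T *m L *m y) ord0 ord0 = Rst by rewrite -mulmxA Ly bE !wvE ws wt RR.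
  rewrite quadE // => e; lra.
have hyy : bil adj y y = 2 * Rst by rewrite RE2; field.
set dd := wv - y.
have Ldd : L *m dd = 0.
  apply: bil_L0; apply/eqP; rewrite eq_le bil_ge0 andbT.
  rewrite /dd bil_sub hwy hyy; rewrite hyy in hbw; lra.
set c := (\sum_j w j) / n%:R.
set e := dd - c *: (const_mx 1 : 'cV[R]_n).
have L1 : L *m (const_mx 1 : 'cV[R]_n) = 0.
  apply/matrixP => i j; rewrite (ord1 j) LmulE [RHS]mxE big1 // => k _.
  by rewrite !mxE subrr mulr0.
have Le : L *m e = 0 by rewrite /e mulmxBr -scalemxAr L1 scaler0 Ldd subr0.
have ye : \sum_i y i ord0 * e i ord0 = 0 by rewrite -dotE kerL // mxE.
have ee : forall i, e i ord0 = w i - y i ord0 - c by move=> i; rewrite !mxE mulr1.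
set B2 := \sum_i (y i ord0)^+2.
set Q := \sum_i (w i - c)^+2.
have Qge : B2 <= Q.
  have eQ : Q = B2 + 2 * (\sum_i y i ord0 * e i ord0) + \sum_i (e i ord0)^+2.
    rewrite /Q /B2 mulr_sumr -!big_split; apply: eq_bigr => i _ /=; rewrite ee; ring.
  have : 0 <= \sum_i (e i ord0)^+2 by apply: sumr_ge0 => i _; apply: sqr_ge0.
  rewrite eQ ye; lra.
have B0 : 0 <= B2 by apply: sumr_ge0 => i _; apply: sqr_ge0.
case: (eqVneq B2 0) => [B20|B2nz].
  exists [set s]; split.
  - by rewrite inE.
  - by rewrite inE eq_sym.
  - by rewrite BE -/B2 B20 mul0r mulr_ge0 // mulr_ge0.
have B2pos : 0 < B2 by rewrite lt0r B2nz B0.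
have Rpos : 0 < Rst.
  rewrite lt0r R0 andbT; apply/eqP => R00.
  have : bil adj y y = 0 by rewrite hyy R00 mulr0.
  move/bil_L0; rewrite -/L Ly => b0.
  have : b s ord0 = 1 by rewrite !mxE eqxx /= (negbTE hst) subr0.
  by rewrite b0 mxE => /eqP; rewrite eq_sym oner_eq0.
have dpos : 0 < (dmax adj)%:R :> R.
  rewrite lt0r hd0 andbT pnatr_eq0; apply/eqP => d0.
  have noadj : forall i j, adj i j = false.
    move=> i j; apply/negbTE/negP => hij.
    have : (deg adj i <= dmax adj)%N by rewrite /dmax; exact: leq_bigmax.
    rewrite d0 leqn0 cards_eq0 => /eqP hE.
    have : j \in [set v | adj i v] by rewrite inE.
    by rewrite hE inE.
  have : bil adj y y = 0.
    by rewrite /bil big1 // => i _; rewrite big1 // => j _; rewrite noadj !mul0r.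
  rewrite hyy => /eqP; rewrite mulf_eq0 pnatr_eq0 /= (gt_eqF Rpos) //.
set d := (dmax adj)%:R in hd0 dpos *.
pose K := Num.sqrt (9 * d * Rst / B2).
have hK2 : K^+2 = 9 * d * Rst / B2.
  by rewrite sqr_sqrtr // divr_ge0 // ?mulr_ge0 // ltW.
have hK : 0 < K by rewrite sqrtr_gt0 divr_gt0 // mulr_gt0 // mulr_gt0.
have hbilf : bilf adj w w = bil adj wv wv.
  by rewrite /bilf /bil; apply: eq_bigr => i _; apply: eq_bigr => j _; rewrite !wvE.
have hyp : 4 * d * bilf adj w w < K^+2 * \sum_i (w i - (\sum_j w j) / n%:R)^+2.
  rewrite -/c -/Q hbilf.
  have h1' : K^+2 * B2 <= K^+2 * Q by rewrite ler_wpM2l // sqr_ge0.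
  have h2' : K^+2 * B2 = 9 * d * Rst by rewrite hK2 divfK.
  have h3' : 4 * d * bil adj wv wv <= 4 * d * (2 * Rst).
    by rewrite ler_wpM2l ?mulr_ge0 // -hyy.
  have h4' : 0 < d * Rst by rewrite mulr_gt0.
  clear -h1' h2' h3' h4'; lra.
have [x [hx hcx]] := cheeger asym s wlo hK dpos hyp.
exists (cset w x); split.
- by rewrite inE whi.
- by rewrite inE -ltNge.
- rewrite BE -/B2.
  have hP : 0 < (#|cset w x| * #|~: cset w x|)%:R :> R.
    rewrite ltr0n muln_gt0; apply/andP; split; apply/card_gt0P.
      by exists s; rewrite inE whi.
    by exists t; rewrite !inE -ltNge.
  have hT0 : 0 <= Theta R adj (cset w x) by rewrite /Theta divr_ge0 // ltW.
  have hTK : Theta R adj (cset w x) <= K by rewrite /Theta ler_pdivrMr.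
  have hT2 : Theta R adj (cset w x) ^+ 2 <= K^+2.
    rewrite -subr_ge0 (_ : K^+2 - _ = (K - Theta R adj (cset w x)) * (K + Theta R adj (cset w x))); last by ring.
    apply: mulr_ge0; clear -hT0 hTK; lra.
  rewrite -(divfK B2nz (9 * d * Rst)) -hK2 mulrC.
  by apply: ler_wpM2r => //; apply: ltW.
Qed.

End Helpers.

Theorem theoremE3 (R : realType) :
  exists C : R, 0 < C /\
  forall (n : nat) (adj : rel 'I_n) (Lp : 'M[R]_n) (s t : 'I_n),
    simple_graph adj ->
    is_pinv (laplacian R adj) Lp ->
    s != t ->
    exists S : {set 'I_n},
      [/\ s \in S, t \notin S &
          biharm Lp s t ^+ 2 * Theta R adj S ^+ 2
            <= C * (dmax adj)%:R * eff_res Lp s t].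
Proof.
exists 9; split; first by rewrite ltr0n.
move=> n adj Lp s t [asym _] hp hst.
exact: Helpers.main_lemma.
Qed.
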